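(* Let $\mathcal{S}=(X,\xrightarrow{\Sigma},\le)$ be a positive very-WSTS and let $x,y\in X$. Then $y$ is repeatedly coverable from $x$ if and only if there exist states $c,d$ of the stuttering automaton $\mathcal{A}_{\downarrow x}$ and $w\in\Sigma^+$ such that $d$ can be reached from $c$ by reading $w$ in $\mathcal{A}_{\downarrow x}$, $\mathrm{numaccel}(c)=\mathrm{numaccel}(d)$, $w$ is positive, and $y\in\mathrm{ideal}(c)$.
   Context: A (labeled, ordered) transition system is $\mathcal{S}=(X,\xrightarrow{\Sigma},\le)$: $X$ a set, $\Sigma$ a finite alphabet, $\xrightarrow{a}\subseteq X\times X$, $\le$ a quasi-ordering; relations extend to words ($x\xrightarrow{+}y$ means $x\xrightarrow{w}y$ for some $w\in\Sigma^+$, $x\xrightarrow{*}y$ for some $w\in\Sigma^*$). $\mathrm{Post}(x,w)=\{y:x\xrightarrow{w}y\}$, extended to sets by union; $\downarrow D=\{x:\exists y\in D,\,x\le y\}$. WSTS: $\le$ wqo and monotone ($x\xrightarrow{a}y$, $x'\ge x$ imply $x'\xrightarrow{w}y'\ge y$ for some $w$). Strong monotonicity: $x\xrightarrow{a}y$, $x'\ge x$ imply $x'\xrightarrow{a}y'$, $y'\ge y$; strong-strict: additionally $x'>x$ yields such $y'>y$. Deterministic: at most one $a$-successor. Ideals: nonempty downward-closed directed subsets; $\mathrm{Idl}(X)$. Completion $\widehat{\mathcal{S}}=(\mathrm{Idl}(X),\Rightarrow_\Sigma,\subseteq)$, $I\xRightarrow{a}J$ iff $J$ is a $\subseteq$-maximal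 ideal included in $\downarrow\mathrm{Post}(I,a)$; when deterministic, $w(I)$ is the unique $J$ with $I\xRightarrow{w}J$ if defined. $w^\infty(I)=\bigcup_kw^k(I)$ if $I\subset w(I)$, else $I$. Levels: $\mathrm{Idl}_0(X)=\mathrm{Idl}(X)$, $\mathrm{Idl}_n(X)$ = unions of strictly increasing sequences in $\mathrm{Idl}_{n-1}(X)$; finitely many levels if some $\mathrm{Idl}_n(X)=\emptyset$. Very-WSTS: WSTS with strong monotonicity whose completion is a deterministic WSTS ($\subseteq$ a wqo on ideals) with strong-strict monotonicity, and $\mathrm{Idl}(X)$ has finitely many levels. Positivity: $w$ is positive for $x$ if $x\xrightarrow{w}z$ for some $z\ge x$; $w$ is positive if it is positive for every $x$ with $\mathrm{Post}(x,w)\ne\emptyset$; $\mathcal{S}$ is positive if every word that is positive for some state is positive. $y$ is repeatedly coverable from $x$ if there are $z_0,z_1,\ldots$ with $x\xrightarrow{*}z_0\xrightarrow{+}z_1\xrightarrow{+}\cdots$ and $z_i\ge y$ for all $i$. Ideal Karp-Miller algorithm on input $(\mathcal{S},I_0)$ (terminates for very-WSTS): builds a tree with node labels $(\mathrm{ideal}(c),\mathrm{numaccel}(c))$ and letter-labeled arcs, starting with root $(I_0,0)$. While a node $c:(I,n)$ is unmarked: if a proper ancestor has ideal $I$, mark $c$; otherwise, if a proper ancestor $c'$ has $\mathrm{ideal}(c')\subset I$ and $\mathrm{numaccel}(c')=n$, relabel $c$ by $(w^\infty(I),n+1)$ with $w$ the arc-label word from $c'$ to $c$; then, with $(I,n)$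 the current label, add for each $a$ with $a(I)$ defined a child $(a(I),n)$ via an $a$-arc; mark $c$. The stuttering automaton $\mathcal{A}_{I_0}$: states are the nodes of the returned tree, all accepting, initial state the root, transitions the arcs plus an $\varepsilon$-transition from each leaf $c$ to any ancestor $c'$ with $\mathrm{ideal}(c')=\mathrm{ideal}(c)$. Reading $w$ allows $\varepsilon$-transitions. *)

(* Defs.v *)
From Stdlib Require Import List.
Import ListNotations.

Set Implicit Arguments.

Definition incl {X : Type} (A B : X -> Prop) : Prop := forall x, A x -> B x.
Definition seteq {X : Type} (A B : X -> Prop) : Prop := incl A B /\ incl B A.
Definition sincl {X : Type} (A B : X -> Prop) : Prop := incl A B /\ ~ incl B A.

Definition alphabet_finite (Sig : Type) : Prop := exists l : list Sig, forall a, In a l.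

Section TS.
Context {X Sig : Type} (tr : Sig -> X -> X -> Prop) (le : X -> X -> Prop).

Inductive steps : list Sig -> X -> X -> Prop :=
| steps_nil x : steps [] x x
| steps_cons a w x y z : tr a x y -> steps w y z -> steps (a :: w) x z.

Definition quasi_order : Prop :=
  (forall x, le x x) /\ (forall x y z, le x y -> le y z -> le x z).

Definition wqo : Prop :=
  quasi_order /\ forall f : nat -> X, exists i j, i < j /\ le (f i) (f j).

Definition Post (I : X -> Prop) (a : Sig) : X -> Prop :=
  fun y => exists x, I x /\ tr a x y.
Definition down (D : X -> Prop) : X -> Prop := fun x => exists y, D y /\ le x y.

Definition monotone : Prop :=
  forall a x y x', tr a x y -> le x x' ->
    exists w y', steps w x' y' /\ le y y'.

Definition strongly_monotone : Prop :=
  forall a x y x', tr a x y -> le x x' ->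
    exists y', tr a x' y' /\ le y y'.

Definition WSTS : Prop := wqo /\ monotone.

Definition is_ideal (D : X -> Prop) : Prop :=
  (exists x, D x) /\
  (forall x y, le x y -> D y -> D x) /\
  (forall x y, D x -> D y -> exists z, D z /\ le x z /\ le y z).

Definition cstep (a : Sig) (I J : X -> Prop) : Prop :=
  is_ideal I /\ is_ideal J /\ incl J (down (Post I a)) /\
  (forall K, is_ideal K -> incl K (down (Post I a)) -> incl J K -> incl K J).

Inductive csteps : list Sig -> (X -> Prop) -> (X -> Prop) -> Prop :=
| csteps_nil I : is_ideal I -> csteps [] I I
| csteps_cons a w I J K : cstep a I J -> csteps w J K -> csteps (a :: w) I K.

Definition completion_deterministic : Prop :=
  forall a I J1 J2, cstep a I J1 -> cstep a I J2 -> seteq J1 J2.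

Definition ideals_wqo : Prop :=
  forall f : nat -> (X -> Prop), (forall k, is_ideal (f k)) ->
    exists i j, i < j /\ incl (f i) (f j).

Definition completion_monotone : Prop :=
  forall a I J I', cstep a I J -> is_ideal I' -> incl I I' ->
    exists w J', csteps w I' J' /\ incl J J'.

Definition completion_strong_strict : Prop :=
  forall a I J I', cstep a I J -> is_ideal I' -> incl I I' ->
    (exists J', cstep a I' J' /\ incl J J') /\
    (sincl I I' -> exists J', cstep a I' J' /\ sincl J J').

Fixpoint level (n : nat) (D : X -> Prop) : Prop :=
  match n with
  | 0 => is_ideal D
  | S m => exists f : nat -> (X -> Prop),
      (forall k, level m (f k)) /\
      (forall k, sincl (f k) (f (S k))) /\
      seteq D (fun x => exists k, f k x)
  end.

Definition finitely_many_levels : Prop :=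
  exists n, forall D, ~ level n D.

Definition very_WSTS : Prop :=
  WSTS /\ strongly_monotone /\
  completion_deterministic /\ ideals_wqo /\ completion_monotone /\
  completion_strong_strict /\ finitely_many_levels.

Definition positive_for (w : list Sig) (x : X) : Prop :=
  exists z, steps w x z /\ le x z.

Definition positive_word (w : list Sig) : Prop :=
  forall x, (exists z, steps w x z) -> positive_for w x.

Definition positive_system : Prop :=
  forall w, (exists x, positive_for w x) -> positive_word w.

Definition repeatedly_coverable (x y : X) : Prop :=
  exists z : nat -> X,
    (exists w, steps w x (z 0)) /\
    (forall i, exists w, w <> [] /\ steps w (z i) (z (S i))) /\
    (forall i, le y (z i)).

Definition winf (w : list Sig) (I K : X -> Prop) : Prop :=
  ((exists J, csteps w I J /\ sincl I J) /\
     exists f : nat -> (X -> Prop), seteq (f 0) I /\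
       (forall k, csteps w (f k) (f (S k))) /\
       seteq K (fun x => exists k, f k x))
  \/ ((~ exists J, csteps w I J /\ sincl I J) /\ seteq K I).

(** * Output of the ideal Karp-Miller algorithm on input (S, I0).
    The tree is represented by its set of nodes, each node being identified
    with the word labelling the arcs from the root to it (children of a node
    carry distinct letters).  [labI u] and [labn u] are the final labels
    ideal(u) and numaccel(u). *)
Section KM.
Variable I0 : X -> Prop.
Variable node : list Sig -> Prop.
Variable labI : list Sig -> (X -> Prop).
Variable labn : list Sig -> nat.

(** label (P, m) of node u at its creation, before processing *)
Definition pre_label (u : list Sig) (P : X -> Prop) (m : nat) : Prop :=
  (u = [] /\ seteq P I0 /\ m = 0) \/
  (exists v a, u = v ++ [a] /\ cstep a (labI v) P /\ m = labn v).

Definition expanded (u : list Sig) : Prop :=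
  forall a, node (u ++ [a]) <-> exists J, cstep a (labI u) J.

Definition KM_output : Prop :=
  node [] /\
  (exists l : list (list Sig), forall u, node u -> In u l) /\
  (forall u a, node (u ++ [a]) -> node u) /\
  forall u, node u -> exists P m, pre_label u P m /\
    (
      ((exists v s, u = v ++ s /\ s <> [] /\ seteq (labI v) P) /\
         seteq (labI u) P /\ labn u = m /\ (forall a, ~ node (u ++ [a])))
    \/
      ((~ exists v s, u = v ++ s /\ s <> [] /\ seteq (labI v) P) /\
       (exists v s, u = v ++ s /\ s <> [] /\ labn v = m /\ sincl (labI v) P /\
          winf s P (labI u)) /\
       labn u = S m /\ expanded u)
    \/
      ((~ exists v s, u = v ++ s /\ s <> [] /\ seteq (labI v) P) /\
       (~ exists v s, u = v ++ s /\ s <> [] /\ labn v = m /\ sincl (labI v) P) /\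
       seteq (labI u) P /\ labn u = m /\ expanded u)).

(** Stuttering automaton A_{I0}: states are nodes, all accepting, initial
    state the root; arcs, plus ε-transitions from each leaf to any proper
    ancestor with the same ideal. [reads c w d]: d is reached from c by
    reading w (ε-transitions allowed). *)
Definition leaf (u : list Sig) : Prop := node u /\ forall a, ~ node (u ++ [a]).

Inductive reads : list Sig -> list Sig -> list Sig -> Prop :=
| reads_nil c : node c -> reads c [] c
| reads_letter c a w d : node c -> node (c ++ [a]) -> reads (c ++ [a]) w d ->
    reads c (a :: w) d
| reads_eps c c' w d : leaf c -> (exists s, c = c' ++ s /\ s <> []) ->
    seteq (labI c') (labI c) -> reads c' w d -> reads c w d.

End KM.
End TS.

(* Main.v *)
Require Import Defs.
From Stdlib Require Import List Lia Arith Classical ClassicalEpsilon.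
Import ListNotations.
Local Notation incl := Defs.incl.

Section Gen.
Context {X Sig : Type} (tr : Sig -> X -> X -> Prop) (le : X -> X -> Prop).
Context (Hwqo : wqo le) (Hsm : strongly_monotone tr le)
        (Hdet : completion_deterministic tr le)
        (Hss : completion_strong_strict tr le).

Lemma qle_refl : forall a, le a a. Proof. exact (proj1 (proj1 Hwqo)). Qed.
Lemma qle_trans : forall a b c, le a b -> le b c -> le a c.
Proof. exact (proj2 (proj1 Hwqo)). Qed.

Lemma seteq_sym (A B : X -> Prop) : seteq A B -> seteq B A.
Proof. unfold seteq; tauto. Qed.
Lemma seteq_trans (A B C : X -> Prop) : seteq A B -> seteq B C -> seteq A C.
Proof. unfold seteq, incl; firstorder. Qed.
Lemma seteq_refl (A : X -> Prop) : seteq A A.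
Proof. unfold seteq, incl; firstorder. Qed.

Lemma is_ideal_ext (A B : X -> Prop) : seteq A B -> is_ideal le A -> is_ideal le B.
Proof.
  intros [H1 H2] [[a Ha] [Hd Hdir]]. split; [|split].
  - exists a; auto.
  - intros p q Hpq Hq. apply H1. apply (Hd p q Hpq). auto.
  - intros p q Hp Hq. destruct (Hdir p q (H2 _ Hp) (H2 _ Hq)) as [r [Hr [H3 H4]]].
    exists r; auto.
Qed.

Lemma sincl_ext (A B A' B' : X -> Prop) : seteq A A' -> seteq B B' -> sincl A B -> sincl A' B'.
Proof. unfold seteq, sincl, incl; firstorder. Qed.

Lemma downPost_mono (I I' : X -> Prop) a : incl I I' ->
  incl (down le (Post tr I a)) (down le (Post tr I' a)).
Proof.
  intros H p [q [[i [Hi Ht]] Hpq]]. exists q; split; auto. exists i; auto.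
Qed.

Lemma cstep_ext a I J I' J' : seteq I I' -> seteq J J' -> cstep tr le a I J -> cstep tr le a I' J'.
Proof.
  intros HI HJ [Hi [Hj [Hinc Hmax]]]. split; [|split; [|split]].
  - eapply is_ideal_ext; eauto.
  - eapply is_ideal_ext; eauto.
  - intros p Hp. apply (downPost_mono I I'). apply HI. apply Hinc. apply HJ. auto.
  - intros K HK HKinc HJK.
    assert (incl K J).
    { apply Hmax; auto.
      - intros p Hp. apply (downPost_mono I' I). apply HI. auto.
      - intros p Hp. apply HJK. apply HJ. auto. }
    intros p Hp. apply HJ. auto.
Qed.

Lemma steps_app u v a b c : steps tr u a b -> steps tr v b c -> steps tr (u ++ v) a c.
Proof. intros H; induction H; simpl; intros; auto. econstructor; eauto. Qed.

Lemma steps_one a p q : tr a p q -> steps tr [a] p q.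
Proof. intros; econstructor; eauto; constructor. Qed.

Lemma steps_mono w p q p' : steps tr w p q -> le p p' -> exists q', steps tr w p' q' /\ le q q'.
Proof.
  intros H; revert p'; induction H; intros p' Hle.
  - exists p'; split; auto. constructor.
  - destruct (Hsm _ _ _ _ H Hle) as [y' [Hy' Hle']].
    destruct (IHsteps _ Hle') as [z' [Hz' Hz'']]. exists z'; split; auto. econstructor; eauto.
Qed.

Lemma csteps_ideal w I J : csteps tr le w I J -> is_ideal le I /\ is_ideal le J.
Proof. intros H; induction H; auto. destruct H as [? [? _]]; tauto. Qed.

Lemma csteps_snoc w a I J K : csteps tr le w I J -> cstep tr le a J K -> csteps tr le (w ++ [a]) I K.
Proof.
  intros H; induction H; intros; simpl.
  - econstructor; eauto. constructor. destruct H0 as [? [? _]]; auto.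
  - econstructor; eauto.
Qed.

Lemma csteps_src w I J I' : csteps tr le w I J -> seteq I I' -> exists J', csteps tr le w I' J'.
Proof.
  intros H HI. destruct H.
  - exists I'. constructor. apply (is_ideal_ext I); auto.
  - exists K. econstructor; [|eassumption]. eapply cstep_ext; [exact HI|apply seteq_refl|eassumption].
Qed.

Lemma csteps_det w I J1 : csteps tr le w I J1 -> forall I' J2, csteps tr le w I' J2 -> seteq I I' -> seteq J1 J2.
Proof.
  intros H; induction H; intros I' J2 H2 HI.
  - inversion H2; subst; auto.
  - inversion H2; subst. apply (IHcsteps J0); auto.
    apply (Hdet a I' J J0); auto. eapply cstep_ext; [exact HI|apply seteq_refl|eassumption].
Qed.

Lemma csteps_strict w I J : csteps tr le w I J -> forall I', is_ideal le I' -> sincl I I' ->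
  exists J', csteps tr le w I' J' /\ sincl J J'.
Proof.
  intros H; induction H; intros I' HI' Hs.
  - exists I'; split; auto. constructor; auto.
  - destruct (Hss _ _ _ _ H HI' (proj1 Hs)) as [_ Hst].
    destruct (Hst Hs) as [J' [HJ' Hs']].
    destruct (IHcsteps J') as [K' [HK' Hs'']]; auto.
    + destruct HJ' as [_ [? _]]; auto.
    + exists K'; split; auto. econstructor; eauto.
Qed.

Lemma csteps_exec w I K : csteps tr le w I K -> forall k, K k ->
  exists i r, I i /\ steps tr w i r /\ le k r.
Proof.
  intros H; induction H; intros k Hk.
  - exists k, k; repeat split; auto. constructor. apply qle_refl.
  - destruct (IHcsteps k Hk) as [j [r [Hj [Hst Hkr]]]].
    destruct H as [_ [_ [Hinc _]]].
    destruct (Hinc j Hj) as [q [[i [Hi Ht]] Hjq]].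
    destruct (steps_mono _ _ _ _ Hst Hjq) as [r' [Hr' Hrr']].
    exists i, r'; repeat split; auto.
    + econstructor; eauto.
    + eapply qle_trans; eauto.
Qed.


Definition dclosed (D : X -> Prop) := forall a b, le a b -> D b -> D a.
Definition decomp (D : X -> Prop) := exists L : list (X -> Prop),
  (forall I, In I L -> is_ideal le I) /\ (forall p, D p <-> exists I, In I L /\ I p).

Lemma decomp_step D : dclosed D -> ~ decomp D ->
  exists D' z, dclosed D' /\ ~ decomp D' /\ incl D' D /\ D z /\ ~ D' z.
Proof.
  intros Hd Hnd.
  destruct (classic (exists a b, D a /\ D b /\ ~ exists c, D c /\ le a c /\ le b c))
    as [[a [b [Ha [Hb Hnc]]]] | Hno].
  - set (D1 := fun p => D p /\ ~ le a p). set (D2 := fun p => D p /\ ~ le b p).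
    assert (Hd1 : dclosed D1).
    { intros p q Hpq [Hq Hn]. split. apply (Hd p q); auto. intro Hap. apply Hn. eapply qle_trans; eauto. }
    assert (Hd2 : dclosed D2).
    { intros p q Hpq [Hq Hn]. split. apply (Hd p q); auto. intro Hap. apply Hn. eapply qle_trans; eauto. }
    destruct (classic (decomp D1)) as [[L1 [HL1 HL1']] | Hn1].
    + destruct (classic (decomp D2)) as [[L2 [HL2 HL2']] | Hn2].
      * exfalso. apply Hnd. exists (L1 ++ L2). split.
        -- intros I HI. apply in_app_or in HI. destruct HI; auto.
        -- intros p. split.
           ++ intros Hp. destruct (classic (le a p)) as [Hap|Hap].
              ** destruct (classic (le b p)) as [Hbp|Hbp].
                 { exfalso. apply Hnc. exists p; auto. }
                 destruct (proj1 (HL2' p) (conj Hp Hbp)) as [I [HI HIp]].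
                 exists I; split; auto. apply in_or_app; auto.
              ** destruct (proj1 (HL1' p) (conj Hp Hap)) as [I [HI HIp]].
                 exists I; split; auto. apply in_or_app; auto.
           ++ intros [I [HI HIp]]. apply in_app_or in HI. destruct HI as [HI|HI].
              ** apply (proj2 (HL1' p)). exists I; auto.
              ** apply (proj2 (HL2' p)). exists I; auto.
      * exists D2, b. split; [auto|split; [auto|split; [|split; [auto|]]]].
        -- intros p [Hp _]; auto.
        -- intros [_ Hn]. apply Hn. apply qle_refl.
    + exists D1, a. split; [auto|split; [auto|split; [|split; [auto|]]]].
      * intros p [Hp _]; auto.
      * intros [_ Hn]. apply Hn. apply qle_refl.
  - exfalso. apply Hnd.
    destruct (classic (exists p, D p)) as [[p Hp] | Hne].
    + exists [D]. split.
      * intros I [HI|[]]. subst I. split; [exists p; auto | split; auto].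
        intros u v Hu Hv. apply NNPP. intro Hn. apply Hno. exists u, v; auto.
      * intros q; split.
        -- intros Hq. exists D; split; simpl; auto.
        -- intros [I [[HI|[]] Hq]]. subst; auto.
    + exists []. split.
      * intros I [].
      * intros q; split.
        -- intros Hq. exfalso; apply Hne; eauto.
        -- intros [I [[] _]].
Qed.

Lemma decomp_all D : dclosed D -> decomp D.
Proof.
  intros Hd. apply NNPP. intros Hnd.
  destruct (decomp_step D Hd Hnd) as [D1 [z0 _]].
  set (Pn := fun (E : X -> Prop) (pz : (X -> Prop) * X) =>
         dclosed (fst pz) /\ ~ decomp (fst pz) /\ incl (fst pz) E /\ E (snd pz) /\ ~ fst pz (snd pz)).
  set (inh := inhabits (D, z0)).
  set (nxt := fun E => epsilon inh (Pn E)).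
  assert (Hnxt : forall E, dclosed E -> ~ decomp E -> Pn E (nxt E)).
  { intros E HE HnE. unfold nxt. apply epsilon_spec.
    destruct (decomp_step E HE HnE) as [E' [z [? ?]]]. exists (E', z). unfold Pn; simpl; auto. }
  set (sq := fix sq (n : nat) : X -> Prop := match n with 0 => D | S m => fst (nxt (sq m)) end).
  assert (Hsq : forall n, dclosed (sq n) /\ ~ decomp (sq n)).
  { induction n; simpl; auto. destruct IHn as [H1 H2].
    destruct (Hnxt _ H1 H2) as [? [? _]]; auto. }
  set (pts := fun n => snd (nxt (sq n))).
  assert (Hp1 : forall n, sq n (pts n) /\ ~ sq (S n) (pts n) /\ incl (sq (S n)) (sq n)).
  { intros n. destruct (Hsq n) as [H1 H2]. destruct (Hnxt _ H1 H2) as [_ [_ [Hi [Hin Hout]]]].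
    simpl. unfold pts. auto. }
  assert (Hdec : forall i k, incl (sq (k + S i)) (sq (S i))).
  { intros i k; induction k; simpl; intros p Hp; auto.
    apply IHk. apply (proj2 (proj2 (Hp1 (k + S i)))). auto. }
  destruct Hwqo as [_ Hw]. destruct (Hw pts) as [i [j [Hij Hle]]].
  destruct (Hp1 i) as [_ [Hout _]]. apply Hout.
  destruct (Hsq (S i)) as [HdS _]. apply (HdS _ (pts j) Hle).
  assert (Hdec' : forall k, i < k -> incl (sq k) (sq (S i))).
  { intros k Hk. replace k with ((k - S i) + S i) by lia. apply Hdec. }
  exact (Hdec' j Hij _ (proj1 (Hp1 j))).
Qed.

Lemma ideal_in_union (K : X -> Prop) (L : list (X -> Prop)) :
  is_ideal le K -> (forall I, In I L -> is_ideal le I) ->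
  (forall p, K p -> exists I, In I L /\ I p) -> exists I, In I L /\ incl K I.
Proof.
  intros HK; induction L as [|J L IH]; intros HL Hcov.
  - destruct HK as [[k Hk] _]. destruct (Hcov k Hk) as [I [[] _]].
  - destruct (classic (incl K J)) as [HKJ|HKJ].
    + exists J; split; simpl; auto.
    + destruct (classic (forall p, K p -> exists I, In I L /\ I p)) as [Hc|Hc].
      * destruct IH as [I [HI HKI]]; auto. intros I HI; apply HL; simpl; auto.
        exists I; split; simpl; auto.
      * exfalso. apply not_all_ex_not in HKJ. destruct HKJ as [k1 Hk1].
        apply not_all_ex_not in Hc. destruct Hc as [k2 Hk2].
        assert (K k1 /\ ~ J k1) as [Hk1a Hk1b] by tauto.
        assert (K k2 /\ ~ exists I, In I L /\ I k2) as [Hk2a Hk2b] by tauto.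
        destruct HK as [_ [HKd HKdir]].
        destruct (HKdir k1 k2 Hk1a Hk2a) as [k [Hk [H1 H2]]].
        destruct (Hcov k Hk) as [I [[HI|HI] HIk]].
        -- subst I. apply Hk1b. destruct (HL J (or_introl eq_refl)) as [_ [HJd _]]. eauto.
        -- apply Hk2b. exists I; split; auto. destruct (HL I (or_intror HI)) as [_ [HId _]]. eauto.
Qed.

Lemma list_maximal (L : list (X -> Prop)) : forall I0, exists M, (M = I0 \/ In M L) /\ incl I0 M /\
  forall I, In I L -> incl M I -> incl I M.
Proof.
  induction L as [|J L IH]; intros I0.
  - exists I0; split; auto. split. intros p; auto. intros I [].
  - destruct (IH I0) as [M1 [HM1 [H01 Hmax1]]].
    destruct (classic (incl M1 J /\ ~ incl J M1)) as [[HMJ HJM]|Hc].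
    + destruct (IH J) as [M2 [HM2 [HJ2 Hmax2]]].
      exists M2. split.
      * right. destruct HM2; [left; auto|right; auto].
      * split. intros p Hp. apply HJ2, HMJ, H01; auto.
        intros I [HI|HI] HMI. subst I. auto. auto.
    + exists M1. split.
      * destruct HM1; [left; auto|right; right; auto].
      * split; auto.
        intros I [HI|HI] HMI; [subst I|auto].
        apply NNPP; intro Hn; apply Hc; auto.
Qed.

Lemma dclosed_down (A : X -> Prop) : dclosed (down le A).
Proof. intros p q Hpq [r [Hr Hqr]]. exists r; split; auto. eapply qle_trans; eauto. Qed.

Lemma ideal_down1 (p : X) : is_ideal le (down le (fun z => z = p)).
Proof.
  split; [|split].
  - exists p. exists p; split; auto. apply qle_refl.
  - apply dclosed_down.
  - intros u v [u' [Hu Huu]] [v' [Hv Hvv]]. subst. exists p.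
    split; [exists p; split; auto; apply qle_refl|]. split; auto.
Qed.

Lemma maxext D K : dclosed D -> is_ideal le K -> incl K D ->
  exists M, is_ideal le M /\ incl K M /\ incl M D /\
    (forall M', is_ideal le M' -> incl M' D -> incl M M' -> incl M' M).
Proof.
  intros Hd HK HKD. destruct (decomp_all D Hd) as [L [HL HLD]].
  destruct (ideal_in_union K L HK HL) as [I0 [HI0 HKI0]].
  { intros p Hp. apply HLD. auto. }
  destruct (list_maximal L I0) as [M [HM [HI0M Hmax]]].
  assert (HML : In M L) by (destruct HM; subst; auto).
  exists M. split; [auto|]. split; [intros p Hp; auto|]. split.
  - intros p Hp. apply HLD. exists M; auto.
  - intros M' HM' HM'D HMM'.
    destruct (ideal_in_union M' L HM' HL) as [I [HI HM'I]].
    { intros p Hp. apply HLD. auto. }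
    assert (incl I M). { apply Hmax; auto. intros p Hp; auto. }
    intros p Hp; auto.
Qed.

Lemma cstep_exists a I : is_ideal le I -> (exists q, Post tr I a q) -> exists J, cstep tr le a I J.
Proof.
  intros HI [q Hq].
  destruct (maxext (down le (Post tr I a)) (down le (fun z => z = q))) as [M [HM [HqM [HMD Hmax]]]].
  - apply dclosed_down.
  - apply ideal_down1.
  - intros p [r [Hr Hpr]]. subst r. exists q; auto.
  - exists M. split; [auto|split; [auto|split; auto]].
Qed.

Lemma cstep_full a I J : cstep tr le a I J -> incl (down le (Post tr I a)) J.
Proof.
  intros Hc p Hp. destruct Hc as [HI [HJ [HJinc HJmax]]].
  destruct (maxext (down le (Post tr I a)) (down le (fun z => z = p))) as [M [HM [HpM [HMD Hmax]]]].
  - apply dclosed_down.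
  - apply ideal_down1.
  - intros u [r [Hr Hur]]. subst r. eapply dclosed_down; eauto.
  - assert (cstep tr le a I M) by (split; auto).
    destruct (Hdet a I M J) as [HMJ _]; [auto|split; auto|].
    apply HMJ. apply HpM. exists p; split; auto. apply qle_refl.
Qed.


Lemma level_ext n D D' : seteq D D' -> level le n D -> level le n D'.
Proof.
  destruct n; simpl.
  - apply is_ideal_ext.
  - intros HD [f [H1 [H2 H3]]]. exists f; split; auto; split; auto.
    eapply seteq_trans; [apply seteq_sym; eauto|auto].
Qed.

Lemma chain_incl (f : nat -> X -> Prop) : (forall k, incl (f k) (f (S k))) ->
  forall i j, i <= j -> incl (f i) (f j).
Proof.
  intros H i j Hij. induction Hij; intros p Hp; auto. apply H. apply IHHij; auto.
Qed.

Lemma union_chain_ideal (f : nat -> X -> Prop) : (forall k, is_ideal le (f k)) ->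
  (forall k, incl (f k) (f (S k))) -> is_ideal le (fun p => exists k, f k p).
Proof.
  intros Hi Hc. split; [|split].
  - destruct (Hi 0) as [[p Hp] _]. exists p, 0; auto.
  - intros p q Hpq [k Hk]. exists k. destruct (Hi k) as [_ [Hd _]]. eauto.
  - intros p q [i Hp] [j Hq].
    assert (Hp' : f (Nat.max i j) p) by (apply (chain_incl f Hc i); auto; lia).
    assert (Hq' : f (Nat.max i j) q) by (apply (chain_incl f Hc j); auto; lia).
    destruct (Hi (Nat.max i j)) as [_ [_ Hdir]].
    destruct (Hdir p q Hp' Hq') as [r [Hr [H1 H2]]]. exists r; split; auto. exists (Nat.max i j); auto.
Qed.

Lemma level_S_down n : forall D, level le (S n) D -> level le n D.
Proof.
  induction n; intros D.
  - simpl. intros [f [H1 [H2 H3]]]. apply (is_ideal_ext (fun p => exists k, f k p)).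
    + apply seteq_sym; auto.
    + apply union_chain_ideal; auto. intros k; apply (H2 k).
  - intros [f [H1 [H2 H3]]]. exists f. split; auto.
Qed.

Lemma level_le m n D : m <= n -> level le n D -> level le m D.
Proof.
  intros H; induction H; auto. intros Hl. apply IHle. apply level_S_down; auto.
Qed.

Lemma level_ideal n D : level le n D -> is_ideal le D.
Proof. intros H. apply (level_le 0 n); auto. lia. Qed.

Lemma level_cstep n : forall a I J, level le n I -> cstep tr le a I J -> level le n J.
Proof.
  induction n; intros a I J HI Hc.
  - destruct Hc as [_ [HJ _]]; auto.
  - destruct HI as [f [Hf [Hs Heq]]].
    assert (Hfi : forall k, is_ideal le (f k)) by (intros k; eapply level_ideal; eauto).
    assert (Hfc : forall i j, i <= j -> incl (f i) (f j)) by (apply chain_incl; intros k; apply Hs).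
    pose proof Hc as Hc0.
    destruct Hc as [HIi [HJ [HJinc HJmax]]].
    destruct HJ as [[j0 Hj0] _].
    destruct (HJinc j0 Hj0) as [q [[i [Hi Hiq]] _]].
    destruct (proj1 Heq i Hi) as [N HN].
    assert (Hex : forall k, exists G, cstep tr le a (f (k + N)) G).
    { intros k. apply cstep_exists; auto. exists q, i. split; auto.
      apply (Hfc N); auto. lia. }
    set (g := fun k => epsilon (inhabits J) (fun G => cstep tr le a (f (k + N)) G)).
    assert (Hg : forall k, cstep tr le a (f (k + N)) (g k)).
    { intros k. unfold g. apply epsilon_spec. apply Hex. }
    exists g. split; [|split].
    + intros k. eapply IHn; [apply Hf|apply Hg].
    + intros k. destruct (Hss _ _ _ _ (Hg k) (Hfi (S k + N)) (proj1 (Hs (k + N)))) as [_ Hst].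
      destruct (Hst (Hs (k + N))) as [J' [HJ' Hs']].
      apply (sincl_ext (g k) J'); auto. apply seteq_refl.
      apply (Hdet a (f (S k + N))); auto.
    + split.
      * intros p Hp. destruct (HJinc p Hp) as [q' [[i' [Hi' Hiq']] Hpq']].
        destruct (proj1 Heq i' Hi') as [M HM].
        exists M. apply (cstep_full a (f (M + N))); auto.
        exists q'; split; auto. exists i'; split; auto. apply (Hfc M); auto. lia.
      * intros p [k Hk].
        assert (HkI : incl (f (k + N)) I) by (intros u Hu; apply Heq; exists (k + N); auto).
        destruct (Hss _ _ _ _ (Hg k) HIi HkI) as [[J'' [HJ'' Hinc]] _].
        destruct (Hdet a I J'' J HJ'' Hc0) as [H1 _]. auto.
Qed.

Lemma level_csteps n w I J : csteps tr le w I J -> level le n I -> level le n J.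
Proof. intros H; induction H; auto. intros; apply IHcsteps. eapply level_cstep; eauto. Qed.

Lemma accel_chain s P J0 (f : nat -> X -> Prop) :
  csteps tr le s P J0 -> sincl P J0 -> seteq (f 0) P ->
  (forall k, csteps tr le s (f k) (f (S k))) -> forall k, sincl (f k) (f (S k)).
Proof.
  intros HP HPJ Hf0 Hf k. induction k.
  - assert (seteq (f 1) J0) by (apply (csteps_det s (f 0) (f 1) (Hf 0) P J0); auto).
    apply (sincl_ext P J0); auto; apply seteq_sym; auto.
  - destruct (csteps_strict s (f k) (f (S k)) (Hf k) (f (S k))) as [J' [HJ' Hs']]; auto.
    + apply (csteps_ideal _ _ _ (Hf k)).
    + apply (sincl_ext (f (S k)) J'); auto. apply seteq_refl.
      apply (csteps_det s (f (S k)) J' HJ' (f (S k)) (f (S (S k)))); auto. apply seteq_refl.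
Qed.

Lemma accel_level n s P J0 (f : nat -> X -> Prop) :
  csteps tr le s P J0 -> sincl P J0 -> seteq (f 0) P ->
  (forall k, csteps tr le s (f k) (f (S k))) -> level le n P ->
  level le (S n) (fun p => exists k, f k p).
Proof.
  intros HP HPJ Hf0 Hf Hl. exists f. split; [|split].
  - intros k; induction k.
    + eapply level_ext; [apply seteq_sym; eauto|auto].
    + eapply level_csteps; eauto.
  - eapply accel_chain; eauto.
  - apply seteq_refl.
Qed.

Lemma accel_ideal s P J0 (f : nat -> X -> Prop) :
  csteps tr le s P J0 -> sincl P J0 -> seteq (f 0) P ->
  (forall k, csteps tr le s (f k) (f (S k))) -> is_ideal le P ->
  is_ideal le (fun p => exists k, f k p).
Proof. intros. apply (level_ideal 1). eapply accel_level; eauto. Qed.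


Context (Hlev : finitely_many_levels le) (Hpos : positive_system tr le) (x0 : X)
  (node : list Sig -> Prop) (labI : list Sig -> (X -> Prop)) (labn : list Sig -> nat)
  (HKM : KM_output tr le (down le (fun z => z = x0)) node labI labn).

Lemma node_prefix : forall s u, node (u ++ s) -> node u.
Proof.
  intros s; induction s using rev_ind; intros u Hn.
  - rewrite app_nil_r in Hn; auto.
  - apply IHs. rewrite app_assoc in Hn. destruct HKM as [_ [_ [Hc _]]]. eapply Hc; eauto.
Qed.

Lemma winf_incl s P K : winf tr le s P K -> incl P K.
Proof.
  intros [[_ [f [Hf0 [_ HK]]]] | [_ HK]] p Hp.
  - apply HK. exists 0. apply Hf0; auto.
  - apply HK; auto.
Qed.

Definition AccInfo (p : list Sig) (a : Sig) (P : X -> Prop) : Prop :=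
  exists v s', p ++ [a] = v ++ s' /\ s' <> [] /\ labn v = labn p /\ sincl (labI v) P /\
     winf tr le s' P (labI (p ++ [a])).

Lemma child_info p a : node (p ++ [a]) -> exists P, cstep tr le a (labI p) P /\
  incl P (labI (p ++ [a])) /\
  ((labn (p ++ [a]) = labn p /\ seteq (labI (p ++ [a])) P) \/
   (labn (p ++ [a]) = S (labn p) /\ AccInfo p a P)).
Proof.
  intros Hn. destruct HKM as [_ [_ [_ H]]]. destruct (H _ Hn) as [P [m [Hpre Hcase]]].
  destruct Hpre as [[Habs _] | [v [b [Heq [Hcs Hm]]]]].
  { exfalso. destruct p; discriminate. }
  apply app_inj_tail in Heq. destruct Heq as [<- <-]. subst m.
  exists P. split; auto.
  destruct Hcase as [[_ [Heq [Hm _]]] | [[_ [[v [s [H1 [H2 [H3 [H4 H5]]]]]] [Hm _]]] | [_ [_ [Heq [Hm _]]]]]].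
  - split. apply (proj2 Heq). left; split; auto.
  - split. eapply winf_incl; eauto. right; split; auto. exists v, s; auto.
  - split. apply (proj2 Heq). left; split; auto.
Qed.

Lemma root_info : seteq (labI []) (down le (fun z => z = x0)).
Proof.
  destruct HKM as [Hr [_ [_ H]]]. destruct (H _ Hr) as [P [m [Hpre Hcase]]].
  destruct Hpre as [[_ [HP _]] | [v [b [Heq _]]]].
  2:{ exfalso. destruct v; discriminate. }
  destruct Hcase as [[[v [s [H1 [H2 _]]]] _] | [[_ [[v [s [H1 [H2 _]]]] _]] | [_ [_ [Heq _]]]]].
  - symmetry in H1. apply app_eq_nil in H1. tauto.
  - symmetry in H1. apply app_eq_nil in H1. tauto.
  - eapply seteq_trans; eauto.
Qed.

Lemma labn_mono : forall s u, node (u ++ s) -> labn u <= labn (u ++ s).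
Proof.
  intros s; induction s using rev_ind; intros u Hn.
  - rewrite app_nil_r; auto.
  - rewrite app_assoc in *. pose proof (IHs u (node_prefix [x] _ Hn)).
    destruct (child_info _ _ Hn) as [P [_ [_ [[H1 _]|[H1 _]]]]]; lia.
Qed.

Lemma ideal_inv : forall u, node u -> is_ideal le (labI u).
Proof.
  intros u; destruct u as [|a p] using rev_ind; intros Hn.
  - eapply is_ideal_ext; [apply seteq_sym, root_info|apply ideal_down1].
  - destruct (child_info _ _ Hn) as [P [HP [_ [[_ Heq]|[_ Hacc]]]]].
    + eapply is_ideal_ext; [apply seteq_sym, Heq|]. destruct HP as [_ [? _]]; auto.
    + destruct Hacc as [v [s' [_ [_ [_ [_ Hw]]]]]].
      assert (HPi : is_ideal le P) by (destruct HP as [_ [? _]]; auto).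
      destruct Hw as [[[J [HJ HPJ]] [f [Hf0 [Hf HK]]]] | [_ HK]].
      * eapply is_ideal_ext; [apply seteq_sym, HK|]. eapply accel_ideal; eauto.
      * eapply is_ideal_ext; [apply seteq_sym, HK|]. auto.
Qed.

Lemma seg_csteps : forall s v, node (v ++ s) -> labn v = labn (v ++ s) ->
  exists K, csteps tr le s (labI v) K /\ seteq K (labI (v ++ s)).
Proof.
  intros s; induction s as [|b s IH] using rev_ind; intros v Hn Hl.
  - exists (labI v). rewrite app_nil_r. split; [|apply seteq_refl].
    constructor. rewrite app_nil_r in Hn. apply ideal_inv; auto.
  - rewrite app_assoc in *.
    pose proof (labn_mono s v (node_prefix [b] _ Hn)) as Hm1.
    destruct (child_info _ _ Hn) as [P [HP [_ [[H1 Heq]|[H1 _]]]]]; [|lia].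
    destruct (IH v (node_prefix [b] _ Hn)) as [K [HK HKeq]]; [lia|].
    exists P. split.
    + eapply csteps_snoc; eauto. eapply cstep_ext; [apply seteq_sym, HKeq|apply seteq_refl|auto].
    + apply seteq_sym; auto.
Qed.

Lemma accel_union p a P : node (p ++ [a]) -> cstep tr le a (labI p) P -> AccInfo p a P ->
  exists s' (f : nat -> X -> Prop), seteq (f 0) P /\ (forall k, csteps tr le s' (f k) (f (S k))) /\
    seteq (labI (p ++ [a])) (fun z => exists k, f k z) /\
    exists J, csteps tr le s' P J /\ sincl P J.
Proof.
  intros Hn HP [v [s' [Heq [Hne [Hl [Hs Hw]]]]]].
  destruct (exists_last Hne) as [s'' [b Hs'']]. subst s'.
  rewrite app_assoc in Heq. apply app_inj_tail in Heq. destruct Heq as [Hp <-]. subst p.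
  destruct (seg_csteps s'' v (node_prefix [a] _ Hn) Hl) as [K [HK HKeq]].
  assert (Hc : csteps tr le (s'' ++ [a]) (labI v) P).
  { eapply csteps_snoc; eauto. eapply cstep_ext; [apply seteq_sym, HKeq|apply seteq_refl|auto]. }
  assert (HPi : is_ideal le P) by (destruct HP as [_ [? _]]; auto).
  destruct (csteps_strict _ _ _ Hc P HPi Hs) as [J [HJ HPJ]].
  exists (s'' ++ [a]).
  destruct Hw as [[_ [f [Hf0 [Hf HK']]]] | [Hno _]].
  - exists f. split; [auto|split; [auto|split; [auto|exists J; auto]]].
  - exfalso. apply Hno. exists J; auto.
Qed.

Lemma level_branch : forall s u, node (u ++ s) -> forall n, level le n (labI u) ->
  level le (n + (labn (u ++ s) - labn u)) (labI (u ++ s)).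
Proof.
  intros s; induction s as [|b s IH] using rev_ind; intros u Hn n Hl.
  - rewrite app_nil_r. replace (n + (labn u - labn u)) with n by lia. auto.
  - rewrite app_assoc in *.
    pose proof (labn_mono s u (node_prefix [b] _ Hn)) as Hm1.
    pose proof (IH u (node_prefix [b] _ Hn) n Hl) as Hl'.
    destruct (child_info _ _ Hn) as [P [HP [_ [[H1 Heq]|[H1 Hacc]]]]].
    + rewrite H1. eapply level_ext; [apply seteq_sym, Heq|]. eapply level_cstep; eauto.
    + destruct (accel_union _ _ _ Hn HP Hacc) as [s' [f [Hf0 [Hf [HK [J [HJ HPJ]]]]]]].
      replace (n + (labn ((u ++ s) ++ [b]) - labn u)) with (S (n + (labn (u ++ s) - labn u))) by lia.
      eapply level_ext; [apply seteq_sym, HK|]. eapply accel_level; eauto.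
      eapply level_cstep; eauto.
Qed.

Lemma eps_labn c c' s : node c -> c = c' ++ s -> seteq (labI c') (labI c) -> labn c' = labn c.
Proof.
  intros Hn Hc Heq. subst c.
  pose proof (labn_mono s c' Hn) as Hm.
  set (d := labn (c' ++ s) - labn c').
  assert (Hk : forall k, level le (k * d) (labI c')).
  { induction k.
    - simpl. apply ideal_inv. eapply node_prefix; eauto.
    - pose proof (level_branch s c' Hn _ IHk) as H. fold d in H.
      eapply level_ext; [apply seteq_sym, Heq|]. replace (S k * d) with (k * d + d) by lia. auto. }
  destruct Hlev as [N HN].
  destruct (Nat.eq_dec d 0) as [Hd|Hd]; [unfold d in Hd; lia|].
  exfalso. apply (HN (labI c')). apply (level_le N (N * d)); auto. nia.
Qed.

Lemma reads_main c w d : reads node labI c w d -> labn c <= labn d /\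
  (labn c = labn d -> exists K, csteps tr le w (labI c) K).
Proof.
  intros H; induction H.
  - split; auto. intros _. exists (labI c). constructor. apply ideal_inv; auto.
  - destruct IHreads as [Hle Himp].
    destruct (child_info _ _ H0) as [P [HP [_ [[Hq1 Heq]|[Hq1 _]]]]].
    + split; [lia|]. intros Heqn. destruct Himp as [K HK]; [lia|].
      exists K. eapply csteps_cons; [|exact HK]. eapply cstep_ext; [apply seteq_refl|apply seteq_sym, Heq|auto].
    + split; [lia|]. intros. lia.
  - destruct H0 as [s [Hc Hs]].
    assert (labn c' = labn c) by (eapply eps_labn; eauto; apply (proj1 H)).
    destruct IHreads as [Hle Himp]. split; [lia|]. intros Heqn.
    destruct Himp as [K HK]; [lia|]. eapply csteps_src; eauto.
Qed.


Definition Cov (I : X -> Prop) := forall p, I p -> exists v r, steps tr v x0 r /\ le p r.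

Lemma cov_cstep a I J : Cov I -> cstep tr le a I J -> Cov J.
Proof.
  intros HC [_ [_ [Hinc _]]] p Hp.
  destruct (Hinc p Hp) as [q [[i [Hi Ht]] Hpq]].
  destruct (HC i Hi) as [v [r [Hv Hir]]].
  destruct (Hsm _ _ _ _ Ht Hir) as [r' [Hr' Hqr']].
  exists (v ++ [a]), r'. split.
  - eapply steps_app; eauto. apply steps_one; auto.
  - eapply qle_trans; eauto.
Qed.

Lemma cov_csteps w I J : csteps tr le w I J -> Cov I -> Cov J.
Proof. intros H; induction H; auto. intros; apply IHcsteps. eapply cov_cstep; eauto. Qed.

Lemma cov_incl I J : incl I J -> Cov J -> Cov I.
Proof. intros H HC p Hp. apply HC, H; auto. Qed.

Lemma cov_inv : forall u, node u -> Cov (labI u).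
Proof.
  intros u; destruct u as [|a p] using rev_ind; intros Hn.
  - apply (cov_incl _ _ (proj1 root_info)). intros p [q [Hq Hpq]]. subst q.
    exists [], x0. split; auto. constructor.
  - assert (HCp : Cov (labI p)) by (apply IHp; eapply node_prefix; eauto).
    destruct (child_info _ _ Hn) as [P [HP [_ [[_ Heq]|[_ Hacc]]]]].
    + apply (cov_incl _ _ (proj1 Heq)). eapply cov_cstep; eauto.
    + destruct (accel_union _ _ _ Hn HP Hacc) as [s' [f [Hf0 [Hf [HK _]]]]].
      apply (cov_incl _ _ (proj1 HK)).
      assert (Hfk : forall k, Cov (f k)).
      { induction k.
        - apply (cov_incl _ _ (proj1 Hf0)). eapply cov_cstep; eauto.
        - eapply cov_csteps; eauto. }
      intros q [k Hk]. apply (Hfk k); auto.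
Qed.

Lemma backward c d w y : node c -> w <> [] -> reads node labI c w d -> labn c = labn d ->
  positive_word tr le w -> labI c y -> repeatedly_coverable tr le x0 y.
Proof.
  intros Hc Hw Hr Hl Hpw Hy.
  destruct (proj2 (reads_main c w d Hr) Hl) as [K HK].
  destruct (csteps_ideal _ _ _ HK) as [_ [[k Hk] _]].
  destruct (csteps_exec _ _ _ HK k Hk) as [i [r [Hi [Hir _]]]].
  destruct (ideal_inv c Hc) as [_ [_ Hdir]].
  destruct (Hdir y i Hy Hi) as [z [Hz [Hyz Hiz]]].
  destruct (cov_inv c Hc z Hz) as [v [r0 [Hv Hzr0]]].
  assert (Hex : forall u, le r0 u -> exists u', steps tr w u u' /\ le u u').
  { intros u Hu. apply Hpw.
    destruct (steps_mono _ _ _ _ Hir (qle_trans _ _ _ Hiz (qle_trans _ _ _ Hzr0 Hu))) as [u' [Hu' _]].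
    exists u'; auto. }
  set (g := fun u => epsilon (inhabits u) (fun u' => steps tr w u u' /\ le u u')).
  assert (Hg : forall u, le r0 u -> steps tr w u (g u) /\ le u (g u)).
  { intros u Hu. unfold g. apply epsilon_spec. auto. }
  set (zs := fix zs (n : nat) : X := match n with 0 => r0 | S m => g (zs m) end).
  assert (Hzs : forall n, le r0 (zs n)).
  { induction n; simpl. apply qle_refl. eapply qle_trans; [apply IHn|]. apply (Hg _ IHn). }
  exists zs. split; [|split].
  - exists v; auto.
  - intros n. exists w; split; auto. apply (Hg _ (Hzs n)).
  - intros n. eapply qle_trans; [apply Hyz|]. eapply qle_trans; [apply Hzr0|apply Hzs].
Qed.


Lemma reads_app c u d v e : reads node labI c u d -> reads node labI d v e -> reads node labI c (u ++ v) e.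
Proof.
  intros H; induction H; intros; simpl; auto.
  - econstructor; eauto.
  - eapply reads_eps; eauto.
Qed.

Lemma reads_node c w d : reads node labI c w d -> node c /\ node d.
Proof. intros H; induction H; try tauto. destruct H; tauto. Qed.

Lemma node_status c : node c ->
  ((exists v s, c = v ++ s /\ s <> [] /\ seteq (labI v) (labI c)) /\ forall a, ~ node (c ++ [a]))
  \/ expanded tr le node labI c.
Proof.
  intros Hn. destruct HKM as [_ [_ [_ H]]]. destruct (H _ Hn) as [P [m [_ Hcase]]].
  destruct Hcase as [[[v [s [H1 [H2 H3]]]] [H4 [_ H5]]] | [[_ [_ [_ He]]] | [_ [_ [_ [_ He]]]]]].
  - left. split; auto. exists v, s. split; auto. split; auto.
    eapply seteq_trans; eauto. apply seteq_sym; auto.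
  - right; auto.
  - right; auto.
Qed.

Lemma sim_expanded c a p p' : node c -> expanded tr le node labI c -> labI c p -> tr a p p' ->
  exists d, reads node labI c [a] d /\ labI d p'.
Proof.
  intros Hn He Hp Ht.
  destruct (cstep_exists a (labI c) (ideal_inv c Hn)) as [J HJ].
  { exists p', p; auto. }
  assert (Hch : node (c ++ [a])) by (apply He; eauto).
  destruct (child_info _ _ Hch) as [P [HP [HPinc _]]].
  exists (c ++ [a]). split.
  - eapply reads_letter; eauto. constructor; auto.
  - apply HPinc. apply (cstep_full a (labI c)); auto.
    exists p'; split; [exists p; auto|apply qle_refl].
Qed.

Lemma sim1 c a p p' : node c -> labI c p -> tr a p p' ->
  exists d, reads node labI c [a] d /\ labI d p'.
Proof.
  intros Hn Hp Ht. destruct (node_status c Hn) as [[[v [s [Hc [Hs Heq]]]] Hleaf] | He].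
  - assert (Hv : node v) by (subst; eapply node_prefix; eauto).
    destruct (node_status v Hv) as [[_ Hvl] | Hve].
    + exfalso. destruct s as [|b s]; [apply Hs; auto|].
      apply (Hvl b). subst c. apply (node_prefix s). rewrite <- app_assoc. simpl. auto.
    + destruct (sim_expanded v a p p' Hv Hve) as [d [Hd Hd']]; auto.
      { apply (proj2 Heq); auto. }
      exists d; split; auto. eapply reads_eps; eauto. split; auto.
  - eapply sim_expanded; eauto.
Qed.

Lemma sim_steps w p q : steps tr w p q -> forall c, node c -> labI c p ->
  exists d, reads node labI c w d /\ labI d q.
Proof.
  intros H; induction H; intros c Hc Hp.
  - exists c; split; auto. constructor; auto.
  - destruct (sim1 c a x y Hc Hp H) as [d1 [Hd1 Hd1']].
    destruct (IHsteps d1 (proj2 (reads_node _ _ _ Hd1)) Hd1') as [d [Hd Hd']].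
    exists d; split; auto. change (a :: w) with ([a] ++ w). eapply reads_app; eauto.
Qed.

Lemma inf_pigeon {T : Type} (l : list T) : forall (N : nat -> T), (forall i, In (N i) l) ->
  exists c, forall m, exists i, m <= i /\ N i = c.
Proof.
  induction l as [|c l IH]; intros N HN.
  - destruct (HN 0).
  - destruct (classic (forall m, exists i, m <= i /\ N i = c)) as [Hc|Hc].
    + exists c; auto.
    + apply not_all_ex_not in Hc. destruct Hc as [m Hm].
      destruct (IH (fun i => N (i + m))) as [c' Hc'].
      * intros i. destruct (HN (i + m)) as [Heq|Hin]; auto.
        exfalso. apply Hm. exists (i + m). split; [lia|auto].
      * exists c'. intros m'. destruct (Hc' m') as [i [Hi Heq]]. exists (i + m). split; [lia|auto].
Qed.

Lemma forward y : repeatedly_coverable tr le x0 y -> exists (c d : list Sig) (w : list Sig),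
    node c /\ node d /\ w <> [] /\
    reads node labI c w d /\ labn c = labn d /\
    positive_word tr le w /\ labI c y.
Proof.
  intros [z [[w0 H0] [Hst Hy]]].
  assert (Hr : node []) by apply (proj1 HKM).
  assert (Hrx : labI [] x0).
  { apply (proj2 root_info). exists x0; split; auto. apply qle_refl. }
  destruct (sim_steps w0 x0 (z 0) H0 [] Hr Hrx) as [d0 [Hd0 Hd0']].
  set (W := fun i => epsilon (inhabits (@nil Sig)) (fun w => w <> [] /\ steps tr w (z i) (z (S i)))).
  assert (HW : forall i, W i <> [] /\ steps tr (W i) (z i) (z (S i))).
  { intros i. unfold W. apply epsilon_spec. apply Hst. }
  set (Ns := fix Ns (n : nat) : list Sig := match n with 0 => d0 | S m =>
        epsilon (inhabits (@nil Sig)) (fun d => reads node labI (Ns m) (W m) d /\ labI d (z (S m))) end).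
  assert (HN : forall n, node (Ns n) /\ labI (Ns n) (z n)).
  { induction n.
    - simpl. split; auto. apply (proj2 (reads_node _ _ _ Hd0)).
    - destruct IHn as [Hn1 Hn2].
      assert (Hs : reads node labI (Ns n) (W n) (Ns (S n)) /\ labI (Ns (S n)) (z (S n))).
      { exact (epsilon_spec (inhabits (@nil Sig)) (fun d => reads node labI (Ns n) (W n) d /\ labI d (z (S n)))
           (sim_steps _ _ _ (proj2 (HW n)) _ Hn1 Hn2)). }
      split; [apply (proj2 (reads_node _ _ _ (proj1 Hs)))|apply Hs]. }
  assert (HR : forall n, reads node labI (Ns n) (W n) (Ns (S n))).
  { intros n. destruct (HN n) as [Hn1 Hn2].
    assert (Hs : reads node labI (Ns n) (W n) (Ns (S n)) /\ labI (Ns (S n)) (z (S n))).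
    { exact (epsilon_spec (inhabits (@nil Sig)) (fun d => reads node labI (Ns n) (W n) d /\ labI d (z (S n)))
           (sim_steps _ _ _ (proj2 (HW n)) _ Hn1 Hn2)). }
    apply Hs. }
  destruct (proj1 (proj2 HKM)) as [l Hl].
  destruct (inf_pigeon l Ns (fun i => Hl _ (proj1 (HN i)))) as [c Hc].
  set (pick := fun m => epsilon (inhabits 0) (fun i => m <= i /\ Ns i = c)).
  assert (Hpick : forall m, m <= pick m /\ Ns (pick m) = c).
  { intros m. unfold pick. apply epsilon_spec. apply Hc. }
  set (h := fix h (k : nat) : nat := match k with 0 => pick 0 | S k => pick (S (h k)) end).
  assert (Hh : forall k, Ns (h k) = c).
  { destruct k; simpl; apply Hpick. }
  assert (Hhinc : forall k, h k < h (S k)).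
  { intros k. simpl. pose proof (proj1 (Hpick (S (h k)))). lia. }
  assert (Hmono : forall i j, i < j -> h i < h j).
  { intros i j Hij. induction Hij. apply Hhinc. pose proof (Hhinc m). lia. }
  destruct (proj2 Hwqo (fun k => z (h k))) as [k1 [k2 [Hk Hle]]].
  simpl in Hle. pose proof (Hmono _ _ Hk) as Hab.
  set (seg := fix seg (a : nat) (n : nat) : list Sig := match n with 0 => [] | S n => W a ++ seg (S a) n end).
  assert (Hseg : forall n a, steps tr (seg a n) (z a) (z (n + a)) /\
                             reads node labI (Ns a) (seg a n) (Ns (n + a))).
  { induction n; intros a.
    - simpl. split; [constructor|constructor; apply HN].
    - destruct (IHn (S a)) as [H1 H2]. replace (n + S a) with (S n + a) in * by lia.
      simpl seg. split.
      + eapply steps_app; [apply HW|auto].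
      + eapply reads_app; [apply HR|auto]. }
  set (a := h k1) in *. set (b := h k2) in *.
  destruct (Hseg (b - a) a) as [Hs1 Hs2].
  replace (b - a + a) with b in * by lia.
  assert (Hne : seg a (b - a) <> []).
  { destruct (b - a) as [|n] eqn:E; [lia|]. simpl. intros Hnil. apply app_eq_nil in Hnil.
    apply (proj1 (HW a)). tauto. }
  exists c, c, (seg a (b - a)).
  assert (Hca : Ns a = c) by apply Hh. assert (Hcb : Ns b = c) by apply Hh.
  rewrite Hca, Hcb in Hs2.
  split; [rewrite <- Hca; apply HN|]. split; [rewrite <- Hca; apply HN|].
  split; auto. split; auto. split; auto. split.
  - apply Hpos. exists (z a). exists (z b); auto.
  - destruct (HN a) as [_ Hza]. rewrite Hca in Hza.
    destruct (ideal_inv c (proj1 (reads_node _ _ _ Hs2))) as [_ [Hd _]]. eapply Hd; eauto.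
Qed.

End Gen.

Theorem proposition17 (X Sig : Type) (tr : Sig -> X -> X -> Prop)
  (le : X -> X -> Prop)
  (Hfin : alphabet_finite Sig)
  (Hvery : very_WSTS tr le)
  (Hpos : positive_system tr le)
  (x y : X)
  (node : list Sig -> Prop) (labI : list Sig -> (X -> Prop))
  (labn : list Sig -> nat)
  (HKM : KM_output tr le (down le (fun z => z = x)) node labI labn) :
  repeatedly_coverable tr le x y <->
  exists (c d : list Sig) (w : list Sig),
    node c /\ node d /\ w <> [] /\
    reads node labI c w d /\ labn c = labn d /\
    positive_word tr le w /\ labI c y.
Proof.
  destruct Hvery as [[Hw _] [Hsm [Hdet [_ [_ [Hss Hlev]]]]]].
  split.
  - intros H. eapply forward; eauto.
  - intros [c [d [w [Hc [_ [Hne [Hr [Hl [Hp Hy]]]]]]]]]. eapply backward; eauto.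
Qed.
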